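(* The function $k\mapsto T_1(k)$ is decreasing and the function $k\mapsto T_2(k)$ is increasing on $(k_0,\infty)$.
   Context: $I(u)=\tfrac12u\log u+\tfrac12(1-u)\log(1-u)$ on $[0,1]$ ($0\log0=0$). $k_0$ is the unique solution of $\frac{k_0-1}{k_0}\log(k_0-1)=1$. It is known that for every real $k>k_0$ there is a unique $\hat\theta(k)\geq0$ such that $u\mapsto\hat\theta(k)u^k-I(u)$ has exactly two global maximisers $u_1^*(\hat\theta(k),k)<u_2^*(\hat\theta(k),k)$ on $[0,1]$. Define $T_1(k)=u_1^*(\hat\theta(k),k)^k$ and $T_2(k)=u_2^*(\hat\theta(k),k)^k$. *)

(* Defs.v *)
From Stdlib Require Import Reals.
Open Scope R_scope.

Definition xlogx (u : R) : R := if Req_EM_T u 0 then 0 else u * ln u.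

Definition I_fun (u : R) : R := / 2 * xlogx u + / 2 * xlogx (1 - u).

Definition rpow (u k : R) : R := if Rle_dec u 0 then 0 else Rpower u k.

Definition Fth (theta k u : R) : R := theta * rpow u k - I_fun u.

Definition is_gmax (theta k u : R) : Prop :=
  0 <= u <= 1 /\ forall v, 0 <= v <= 1 -> Fth theta k v <= Fth theta k u.

Definition two_gmax (theta k u1 u2 : R) : Prop :=
  u1 < u2 /\ is_gmax theta k u1 /\ is_gmax theta k u2 /\
  forall v, is_gmax theta k v -> v = u1 \/ v = u2.

Definition is_k0 (k0 : R) : Prop := 1 < k0 /\ (k0 - 1) / k0 * ln (k0 - 1) = 1.

(* Main.v *)
Require Import Defs.
From Stdlib Require Import Reals Lra.
From Coquelicot Require Import Coquelicot.
Open Scope R_scope.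


Definition Lf (u : R) : R := ln u - ln (1 - u).
Definition Iu (u : R) : R := / 2 * (u * ln u) + / 2 * ((1 - u) * ln (1 - u)).
Definition E (u k : R) : R := exp (k * ln u).

Lemma ln_lt_xm1 : forall x, 0 < x -> x <> 1 -> ln x < x - 1.
Proof.
  intros x Hx H1.
  assert (ln x <> 0) by (apply ln_neq_0; auto).
  pose proof (exp_ineq1 (ln x) H). rewrite exp_ln in H0 by auto. lra.
Qed.

Lemma I_eq : forall u, 0 < u < 1 -> I_fun u = Iu u.
Proof.
  intros u Hu. unfold I_fun, Iu, xlogx.
  destruct (Req_EM_T u 0); [lra|].
  destruct (Req_EM_T (1 - u) 0); [lra|]. reflexivity.
Qed.

Lemma rpow_eq : forall u k, 0 < u -> rpow u k = E u k.
Proof.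
  intros u k Hu. unfold rpow, E, Rpower.
  destruct (Rle_dec u 0); [lra|]. reflexivity.
Qed.

Lemma Fth_eq : forall th k u, 0 < u < 1 -> Fth th k u = th * E u k - Iu u.
Proof.
  intros. unfold Fth. rewrite rpow_eq by lra. rewrite I_eq by lra. reflexivity.
Qed.

Lemma E_pos : forall u k, 0 < E u k.
Proof. intros; unfold E; apply exp_pos. Qed.

Lemma E_lt : forall a b k, 0 < a -> a < b -> 0 < k -> E a k < E b k.
Proof.
  intros. unfold E. apply exp_increasing. apply Rmult_lt_compat_l; auto.
  apply ln_increasing; auto.
Qed.

Lemma E_lt_inv : forall a b k, 0 < a -> 0 < b -> 0 < k -> E a k < E b k -> a < b.
Proof.
  intros a b k Ha Hb Hk H.
  destruct (Rlt_or_le a b) as [|Hle]; auto.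
  destruct Hle as [Hlt|Heq].
  - pose proof (E_lt b a k Hb Hlt Hk); lra.
  - subst; lra.
Qed.

Lemma E_mult : forall u k l, 0 < u -> E (E u k) l = E u (k * l).
Proof.
  intros. unfold E. rewrite ln_exp. f_equal; ring.
Qed.

Lemma D_Iu : forall u, 0 < u < 1 -> derivable_pt_lim Iu u (/ 2 * Lf u).
Proof.
  intros u Hu. apply is_derive_Reals. unfold Iu, Lf.
  auto_derive.
  - repeat split; lra.
  - replace (1 + - u) with (1 - u) by ring. field. lra.
Qed.

Lemma D_E : forall u k, 0 < u -> derivable_pt_lim (fun x => E x k) u (k * E u k / u).
Proof.
  intros u k Hu. apply is_derive_Reals. unfold E.
  auto_derive; auto. field; lra.
Qed.


Lemma mono_lt : forall f f' a b, a < b ->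
  (forall x, a <= x <= b -> derivable_pt_lim f x (f' x)) ->
  (forall x, a < x < b -> 0 < f' x) -> f a < f b.
Proof.
  intros f f' a b Hab Hd Hp.
  destruct (MVT_cor2 f f' a b Hab Hd) as [c [Hc1 Hc2]].
  assert (0 < f' c * (b - a)) by (apply Rmult_lt_0_compat; [apply Hp; auto | lra]).
  lra.
Qed.

Lemma mono_gt : forall f f' a b, a < b ->
  (forall x, a <= x <= b -> derivable_pt_lim f x (f' x)) ->
  (forall x, a < x < b -> f' x < 0) -> f b < f a.
Proof.
  intros f f' a b Hab Hd Hp.
  destruct (MVT_cor2 f f' a b Hab Hd) as [c [Hc1 Hc2]].
  assert (f' c * (b - a) < 0).
  { assert (0 < - f' c * (b - a)) by (apply Rmult_lt_0_compat; [pose proof (Hp c Hc2); lra | lra]). lra. }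
  lra.
Qed.

Lemma fermat : forall f l a b c, a < c < b -> derivable_pt_lim f c l ->
  (forall x, a < x < b -> f x <= f c) -> l = 0.
Proof.
  intros f l a b c Hc Hd Hm.
  pose (pr := exist (fun l0 => derivable_pt_lim f c l0) l Hd : derivable_pt f c).
  assert (derive_pt f c pr = 0).
  { apply (deriv_maximum f a b c pr); try lra. intros; apply Hm; lra. }
  simpl in H. exact H.
Qed.

Lemma Fth_0 : forall th k, Fth th k 0 = 0.
Proof.
  intros. unfold Fth, rpow, I_fun, xlogx.
  destruct (Rle_dec 0 0); [|lra].
  destruct (Req_EM_T 0 0); [|lra].
  destruct (Req_EM_T (1 - 0) 0); [lra|].
  replace (1 - 0) with 1 by ring. rewrite ln_1. ring.
Qed.

Lemma Fth_1 : forall th k, Fth th k 1 = th.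
Proof.
  intros. unfold Fth, rpow, I_fun, xlogx, Rpower.
  destruct (Rle_dec 1 0); [lra|].
  destruct (Req_EM_T 1 0); [lra|].
  destruct (Req_EM_T (1 - 1) 0); [|lra].
  rewrite ln_1. rewrite Rmult_0_r, exp_0. ring.
Qed.

Lemma ln2_pos : 0 < ln 2.
Proof. pose proof ln_lt_2; lra. Qed.

Lemma gmax_interior : forall th k u, 0 <= th -> 1 < k -> is_gmax th k u -> 0 < u < 1.
Proof.
  intros th k u Hth Hk [Hu Hmax].
  split.
  - destruct (Req_dec u 0) as [H0|H0]; [|lra].
    exfalso. subst u.
    pose proof (Hmax (/2) ltac:(lra)) as H.
    rewrite Fth_0 in H. rewrite Fth_eq in H by lra.
    unfold Iu in H. replace (1 - /2) with (/2) in H by field.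
    rewrite ln_Rinv in H by lra.
    pose proof ln2_pos. pose proof (E_pos (/2) k).
    assert (0 <= th * E (/ 2) k) by (apply Rmult_le_pos; lra).
    nra.
  - destruct (Req_dec u 1) as [H1|H1]; [|lra].
    exfalso. subst u.
    set (eps := exp (- (4 * th * k + 1))).
    assert (Heps0 : 0 < eps) by apply exp_pos.
    assert (Heps1 : eps < / 2).
    { unfold eps. assert (exp (- (4 * th * k + 1)) <= exp (-1)).
      { destruct (Req_dec (4*th*k) 0) as [Z|Z].
        - right. f_equal. lra.
        - left. apply exp_increasing. nra. }
      assert (exp (-1) < / 2).
      { assert (exp 1 * exp (-1) = 1) by (rewrite <- exp_plus; replace (1 + -1) with 0 by ring; apply exp_0).
        pose proof (exp_ineq1 1 ltac:(lra)). pose proof (exp_pos (-1)). nra. }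
      lra. }
    set (v := 1 - eps).
    pose proof (Hmax v ltac:(unfold v; lra)) as H.
    rewrite Fth_1 in H. rewrite Fth_eq in H by (unfold v; lra).
    unfold Iu in H. replace (1 - v) with eps in H by (unfold v; ring).
    assert (Hle : ln eps = - (4 * th * k + 1)) by (unfold eps; apply ln_exp).
    rewrite Hle in H.
    assert (Hv : 0 < v) by (unfold v; lra).
    assert (Hlv : - (2 * eps) <= ln v).
    { assert (ln (/ v) <= / v - 1).
      { destruct (Req_dec (/ v) 1) as [Q|Q].
        - rewrite Q, ln_1. lra.
        - left. apply ln_lt_xm1; auto. apply Rinv_0_lt_compat; auto. }
      rewrite ln_Rinv in H0 by auto.
      assert (/ v - 1 = eps / v) by (unfold v; field; lra).
      assert (eps / v <= 2 * eps).
      { unfold Rdiv. assert (/ v <= 2).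
        { replace 2 with (/ / 2) by field. apply Rinv_le_contravar; unfold v; lra. }
        nra. }
      lra. }
    assert (HE : 1 + k * ln v <= E v k) by (unfold E; apply exp_ineq1_le).
    assert (Hvl : v * ln v <= 0).
    { assert (ln v <= 0).
      { destruct (Req_dec v 1). - unfold v in *; lra.
        - left. rewrite <- ln_1. apply ln_increasing; unfold v in *; lra. }
      nra. }
    assert (th * (1 + k * ln v) <= th * E v k) by (apply Rmult_le_compat_l; lra).
    assert (th * k * ln v >= - (2 * th * k * eps)).
    { assert (0 <= th * k) by nra. nra. }
    nra.
Qed.


Definition sigk (k u : R) : R := Lf u * E u (1 - k) / (2 * k).

Lemma E_1mk : forall u k, 0 < u -> E u (1 - k) = u / E u k.
Proof.
  intros. unfold E. replace ((1 - k) * ln u) with (ln u - k * ln u) by ring.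
  unfold Rminus. rewrite exp_plus, exp_Ropp, exp_ln by auto. reflexivity.
Qed.

Lemma Fs_deriv : forall th k u, 0 < u < 1 ->
  derivable_pt_lim (fun x => th * E x k - Iu x) u (th * (k * E u k / u) - / 2 * Lf u).
Proof.
  intros. apply derivable_pt_lim_minus.
  - apply derivable_pt_lim_scal. apply D_E. lra.
  - apply D_Iu. auto.
Qed.

Lemma gmax_fermat : forall th k u, 0 <= th -> 1 < k -> is_gmax th k u ->
  th * (k * E u k / u) - / 2 * Lf u = 0.
Proof.
  intros th k u Hth Hk Hg.
  pose proof (gmax_interior th k u Hth Hk Hg) as Hu.
  apply (fermat (fun x => th * E x k - Iu x) _ 0 1 u Hu).
  - apply Fs_deriv; auto.
  - intros x Hx. destruct Hg as [_ Hm].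
    rewrite <- !Fth_eq by lra. apply Hm; lra.
Qed.

Lemma gmax_sig : forall th k u, 0 <= th -> 1 < k -> is_gmax th k u -> th = sigk k u.
Proof.
  intros th k u Hth Hk Hg.
  pose proof (gmax_interior th k u Hth Hk Hg) as Hu.
  pose proof (gmax_fermat th k u Hth Hk Hg) as H.
  unfold sigk. rewrite E_1mk by lra.
  pose proof (E_pos u k).
  assert (HL : Lf u = 2 * (th * (k * E u k / u))) by lra.
  rewrite HL. field. split; lra.
Qed.

Lemma Lf_nonpos : forall u, 0 < u <= / 2 -> Lf u <= 0.
Proof.
  intros u Hu. unfold Lf. destruct (Req_dec u (/2)).
  - subst. replace (1 - /2) with (/2) by field. lra.
  - assert (ln u < ln (1 - u)) by (apply ln_increasing; lra). lra.
Qed.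

Lemma Lf_pos : forall u, / 2 < u < 1 -> 0 < Lf u.
Proof.
  intros u Hu. unfold Lf.
  assert (ln (1 - u) < ln u) by (apply ln_increasing; lra). lra.
Qed.

Lemma Lf_lt : forall p q, 0 < p -> p < q -> q < 1 -> Lf p < Lf q.
Proof.
  intros. unfold Lf.
  assert (ln p < ln q) by (apply ln_increasing; lra).
  assert (ln (1 - q) < ln (1 - p)) by (apply ln_increasing; lra). lra.
Qed.

Lemma Lf_zero : forall u, 0 < u < 1 -> Lf u = 0 -> u = / 2.
Proof.
  intros u Hu H. unfold Lf in H.
  assert (u = 1 - u) by (apply ln_inv; lra). lra.
Qed.

Lemma basic : forall th k a b, 0 <= th -> 1 < k -> two_gmax th k a b ->
  / 2 < a /\ a < b /\ b < 1 /\ 0 < th.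
Proof.
  intros th k a b Hth Hk [Hab [Ha [Hb _]]].
  pose proof (gmax_interior th k a Hth Hk Ha) as Ia.
  pose proof (gmax_interior th k b Hth Hk Hb) as Ib.
  pose proof (gmax_fermat th k a Hth Hk Ha) as Fa.
  pose proof (gmax_fermat th k b Hth Hk Hb) as Fb.
  assert (Pa : 0 <= th * (k * E a k / a)).
  { apply Rmult_le_pos; auto. unfold Rdiv. apply Rmult_le_pos; [|left; apply Rinv_0_lt_compat; lra].
    pose proof (E_pos a k); nra. }
  assert (Pb : 0 <= th * (k * E b k / b)).
  { apply Rmult_le_pos; auto. unfold Rdiv. apply Rmult_le_pos; [|left; apply Rinv_0_lt_compat; lra].
    pose proof (E_pos b k); nra. }
  assert (Hth0 : th <> 0).
  { intro Z. subst th. rewrite Rmult_0_l in Fa, Fb.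
    assert (Lf a = 0) by lra. assert (Lf b = 0) by lra.
    apply Lf_zero in H; auto. apply Lf_zero in H0; auto. lra. }
  assert (/ 2 < a).
  { destruct (Rlt_or_le (/2) a); auto. exfalso.
    pose proof (Lf_nonpos a ltac:(lra)).
    assert (th * (k * E a k / a) = 0) by lra.
    apply Rmult_integral in H1. destruct H1; [lra|].
    unfold Rdiv in H1. apply Rmult_integral in H1. destruct H1.
    - apply Rmult_integral in H1; destruct H1; [lra|]. pose proof (E_pos a k); lra.
    - pose proof (Rinv_0_lt_compat a ltac:(lra)); lra. }
  repeat split; lra.
Qed.


Definition gfun (u : R) : R := - ln u / (1 - u).
Definition wfun (u : R) : R := (1 - u) * Lf u.

Lemma ln_gt_1m : forall u, 0 < u -> u <> 1 -> 1 - / u < ln u.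
Proof.
  intros u Hu H1.
  assert (/ u <> 1).
  { intro Q. apply H1. rewrite <- (Rinv_inv u). rewrite Q. field. }
  pose proof (ln_lt_xm1 (/ u) ltac:(apply Rinv_0_lt_compat; auto) H).
  rewrite ln_Rinv in H0 by auto. lra.
Qed.

Lemma D_g : forall u, 0 < u < 1 ->
  derivable_pt_lim gfun u ((- (1 - u) / u - ln u) / (1 - u) ^ 2).
Proof.
  intros u Hu. apply is_derive_Reals. unfold gfun.
  auto_derive.
  - repeat split; lra.
  - field. lra.
Qed.

Lemma g_dec : forall p q, 0 < p -> p < q -> q < 1 -> gfun q < gfun p.
Proof.
  intros p q Hp Hpq Hq.
  apply (mono_gt gfun (fun u => (- (1 - u) / u - ln u) / (1 - u) ^ 2) p q Hpq).
  - intros; apply D_g; lra.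
  - intros x Hx. pose proof (ln_gt_1m x ltac:(lra) ltac:(lra)).
    replace (- (1 - x) / x) with (1 - / x) by (field; lra).
    unfold Rdiv. apply Rmult_neg_pos.
    + lra.
    + apply Rinv_0_lt_compat. apply pow_lt. lra.
Qed.

Lemma g_pos : forall u, 0 < u < 1 -> 0 < gfun u.
Proof.
  intros. unfold gfun. assert (ln u < 0) by (rewrite <- ln_1; apply ln_increasing; lra).
  unfold Rdiv. apply Rmult_lt_0_compat; [lra|]. apply Rinv_0_lt_compat; lra.
Qed.

Lemma D_w : forall u, 0 < u < 1 -> derivable_pt_lim wfun u (/ u - Lf u).
Proof.
  intros u Hu. apply is_derive_Reals. unfold wfun, Lf.
  auto_derive.
  - repeat split; lra.
  - replace (1 + - u) with (1 - u) by ring. field. lra.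
Qed.

Lemma k0_facts : forall k0, is_k0 k0 -> 2 < k0 /\ Lf ((k0 - 1) / k0) = k0 / (k0 - 1).
Proof.
  intros k0 [Hk1 Hk].
  assert (Hl : ln (k0 - 1) = k0 / (k0 - 1)).
  { apply (Rmult_eq_reg_l ((k0 - 1) / k0)).
    - rewrite Hk. field. lra.
    - apply Rgt_not_eq. unfold Rdiv. apply Rmult_lt_0_compat; [lra|].
      apply Rinv_0_lt_compat; lra. }
  split.
  - destruct (Rlt_or_le 2 k0); auto. exfalso.
    assert (ln (k0 - 1) <= 0).
    { destruct (Req_dec k0 2). - subst. replace (2 - 1) with 1 by ring. rewrite ln_1; lra.
      - left. rewrite <- ln_1. apply ln_increasing; lra. }
    assert (0 < k0 / (k0 - 1)).
    { unfold Rdiv; apply Rmult_lt_0_compat; [lra|]. apply Rinv_0_lt_compat; lra. }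
    lra.
  - unfold Lf. replace (1 - (k0 - 1) / k0) with (/ k0) by (field; lra).
    rewrite ln_Rinv by lra. unfold Rdiv. rewrite ln_mult by (try apply Rinv_0_lt_compat; lra).
    rewrite ln_Rinv by lra.
    replace (ln (k0 - 1) + - ln k0 - - ln k0) with (ln (k0 - 1)) by ring.
    rewrite Hl. reflexivity.
Qed.

Lemma w_inc : forall us x y, 0 < us < 1 -> Lf us = / us ->
  0 < x -> x < y -> y <= us -> wfun x < wfun y.
Proof.
  intros us x y Hus HL Hx Hxy Hy.
  apply (mono_lt wfun (fun u => / u - Lf u) x y Hxy).
  - intros; apply D_w; lra.
  - intros t Ht. assert (Lf t < Lf us) by (apply Lf_lt; lra).
    assert (/ us < / t) by (apply Rinv_lt_contravar; nra). lra.
Qed.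

Lemma w_dec : forall us x y, 0 < us < 1 -> Lf us = / us ->
  us <= x -> x < y -> y < 1 -> wfun y < wfun x.
Proof.
  intros us x y Hus HL Hx Hxy Hy.
  apply (mono_gt wfun (fun u => / u - Lf u) x y Hxy).
  - intros; apply D_w; lra.
  - intros t Ht. assert (Lf us < Lf t) by (apply Lf_lt; lra).
    assert (/ t < / us) by (apply Rinv_lt_contravar; nra). lra.
Qed.


Lemma D_sig : forall k u, 0 < u < 1 -> 0 < k ->
  derivable_pt_lim (sigk k) u (E u (1 - k) / (u * (1 - u)) * (1 - (k - 1) * wfun u) / (2 * k)).
Proof.
  intros k u Hu Hk. apply is_derive_Reals. unfold sigk, Lf, E, wfun, Lf.
  auto_derive.
  - repeat split; lra.
  - replace (1 + - u) with (1 - u) by ring. field. lra.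
Qed.

Lemma sig_dec : forall k p q, 1 < k -> 0 < p -> p < q -> q < 1 ->
  (forall x, p < x < q -> 1 < (k - 1) * wfun x) -> sigk k q < sigk k p.
Proof.
  intros k p q Hk Hp Hpq Hq Hw.
  apply (mono_gt (sigk k) (fun u => E u (1 - k) / (u * (1 - u)) * (1 - (k - 1) * wfun u) / (2 * k)) p q Hpq).
  - intros; apply D_sig; lra.
  - intros x Hx. pose proof (Hw x Hx). pose proof (E_pos x (1 - k)).
    unfold Rdiv. rewrite Rmult_assoc. apply Rmult_pos_neg.
    + apply Rmult_lt_0_compat; auto. apply Rinv_0_lt_compat. nra.
    + apply Rmult_neg_pos; [lra|]. apply Rinv_0_lt_compat; lra.
Qed.

Lemma sig_inc : forall k p q, 1 < k -> 0 < p -> p < q -> q < 1 ->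
  (forall x, p < x < q -> (k - 1) * wfun x < 1) -> sigk k p < sigk k q.
Proof.
  intros k p q Hk Hp Hpq Hq Hw.
  apply (mono_lt (sigk k) (fun u => E u (1 - k) / (u * (1 - u)) * (1 - (k - 1) * wfun u) / (2 * k)) p q Hpq).
  - intros; apply D_sig; lra.
  - intros x Hx. pose proof (Hw x Hx). pose proof (E_pos x (1 - k)).
    unfold Rdiv. rewrite Rmult_assoc. apply Rmult_lt_0_compat.
    + apply Rmult_lt_0_compat; auto. apply Rinv_0_lt_compat. nra.
    + apply Rmult_lt_0_compat; [lra|]. apply Rinv_0_lt_compat; lra.
Qed.

Definition Fs (th k x : R) : R := th * E x k - Iu x.

Lemma Fs_deriv2 : forall th k u, 0 < u < 1 -> 0 < k ->
  derivable_pt_lim (Fs th k) u (k * E u k / u * (th - sigk k u)).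
Proof.
  intros th k u Hu Hk.
  replace (k * E u k / u * (th - sigk k u)) with (th * (k * E u k / u) - / 2 * Lf u).
  - apply Fs_deriv; auto.
  - unfold sigk. rewrite E_1mk by lra. pose proof (E_pos u k). field. lra.
Qed.

Lemma F_up : forall th k p q, 0 < k -> 0 < p -> p < q -> q < 1 ->
  (forall x, p < x < q -> sigk k x < th) -> Fs th k p < Fs th k q.
Proof.
  intros th k p q Hk Hp Hpq Hq H.
  apply (mono_lt (Fs th k) (fun u => k * E u k / u * (th - sigk k u)) p q Hpq).
  - intros; apply Fs_deriv2; lra.
  - intros x Hx. pose proof (H x Hx). pose proof (E_pos x k).
    apply Rmult_lt_0_compat; [|lra]. unfold Rdiv. apply Rmult_lt_0_compat; [nra|].
    apply Rinv_0_lt_compat; lra.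
Qed.

Lemma F_down : forall th k p q, 0 < k -> 0 < p -> p < q -> q < 1 ->
  (forall x, p < x < q -> th < sigk k x) -> Fs th k q < Fs th k p.
Proof.
  intros th k p q Hk Hp Hpq Hq H.
  apply (mono_gt (Fs th k) (fun u => k * E u k / u * (th - sigk k u)) p q Hpq).
  - intros; apply Fs_deriv2; lra.
  - intros x Hx. pose proof (H x Hx). pose proof (E_pos x k).
    apply Rmult_pos_neg; [|lra]. unfold Rdiv. apply Rmult_lt_0_compat; [nra|].
    apply Rinv_0_lt_compat; lra.
Qed.

Lemma contra_right : forall th k b q, 1 < k -> 0 < b -> b < q -> q < 1 -> sigk k b = th ->
  (forall x, b < x < q -> 1 < (k - 1) * wfun x) -> Fs th k b < Fs th k q.
Proof.
  intros th k b q Hk Hb Hbq Hq Hs Hw. apply F_up; try lra.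
  intros x Hx. rewrite <- Hs. apply sig_dec; try lra.
  intros y Hy; apply Hw; lra.
Qed.

Lemma contra_left : forall th k p b, 1 < k -> 0 < p -> p < b -> b < 1 -> sigk k b = th ->
  (forall x, p < x < b -> 1 < (k - 1) * wfun x) -> Fs th k b < Fs th k p.
Proof.
  intros th k p b Hk Hp Hpb Hb Hs Hw. apply F_down; try lra.
  intros x Hx. rewrite <- Hs. apply sig_dec; try lra.
  intros y Hy; apply Hw; lra.
Qed.

Lemma contra_inc : forall th k a b, 1 < k -> 0 < a -> a < b -> b < 1 -> sigk k a = th ->
  (forall x, a < x < b -> (k - 1) * wfun x < 1) -> Fs th k b < Fs th k a.
Proof.
  intros th k a b Hk Ha Hab Hb Hs Hw. apply F_down; try lra.
  intros x Hx. rewrite <- Hs. apply sig_inc; try lra.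
  intros y Hy; apply Hw; lra.
Qed.


Lemma Fs_max : forall th k u x, 0 <= th -> 1 < k -> is_gmax th k u -> 0 < x < 1 ->
  Fs th k x <= Fs th k u.
Proof.
  intros th k u x Hth Hk Hg Hx.
  pose proof (gmax_interior th k u Hth Hk Hg).
  unfold Fs. rewrite <- !Fth_eq by lra. destruct Hg as [_ Hm]. apply Hm; lra.
Qed.

Lemma sep : forall k0 k th a b, is_k0 k0 -> k0 < k -> 0 <= th -> two_gmax th k a b ->
  E a k < E ((k0 - 1) / k0) k0 < E b k.
Proof.
  intros k0 k th a b Hk0 Hk Hth Htg.
  destruct (k0_facts k0 Hk0) as [Hk02 HLus].
  set (us := (k0 - 1) / k0) in *.
  assert (Hus : / 2 < us < 1) by (unfold us; split; apply (Rmult_lt_reg_r k0); try lra; field_simplify; lra).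
  assert (HLus' : Lf us = / us) by (rewrite HLus; unfold us; field; lra).
  assert (Hk1 : 1 < k) by lra.
  destruct (basic th k a b Hth Hk1 Htg) as [Ha [Hab [Hb Hthp]]].
  destruct Htg as [_ [Ga [Gb _]]].
  pose proof (gmax_sig th k a Hth Hk1 Ga) as Sa.
  pose proof (gmax_sig th k b Hth Hk1 Gb) as Sb.
  assert (Fab : Fs th k a = Fs th k b).
  { apply Rle_antisym; [apply (Fs_max th k b a)|apply (Fs_max th k a b)]; auto; lra. }
  set (c := k0 / k).
  assert (Hc : 0 < c < 1) by (unfold c; split; [apply Rdiv_lt_0_compat; lra|];
    apply (Rmult_lt_reg_r k); try lra; field_simplify; lra).
  set (vs := E us c).
  assert (Hlus : ln us < 0) by (rewrite <- ln_1; apply ln_increasing; lra).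
  assert (Hlvs : ln vs = c * ln us) by (unfold vs, E; apply ln_exp).
  assert (Hvs : us < vs < 1).
  { split.
    - apply ln_lt_inv; try lra. unfold vs; apply E_pos. rewrite Hlvs. nra.
    - apply ln_lt_inv; try lra. unfold vs; apply E_pos. rewrite Hlvs, ln_1. nra. }
  assert (HEvs : E vs k = E us k0).
  { unfold vs. rewrite E_mult by lra. f_equal. unfold c; field; lra. }
  assert (Hwvs : 1 < (k - 1) * wfun vs).
  { assert (HA : Lf us < Lf vs) by (apply Lf_lt; lra).
    assert (HB : gfun vs < gfun us) by (apply g_dec; lra).
    assert (HB0 : 0 < gfun vs) by (apply g_pos; lra).
    assert (HA0 : 0 < Lf us) by (apply Lf_pos; lra).
    assert (Hwus : wfun us = / (k0 - 1)) by (unfold wfun; rewrite HLus; unfold us; field; lra).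
    assert (Hlvs0 : ln vs < 0) by nra.
    assert (E1 : wfun vs = Lf vs * (- ln vs) / gfun vs) by (unfold wfun, gfun; field; repeat split; lra).
    assert (E2 : wfun us = Lf us * (- ln us) / gfun us) by (unfold wfun, gfun; field; repeat split; lra).
    rewrite Hlvs in E1.
    assert (Lf us / gfun us < Lf vs / gfun vs).
    { unfold Rdiv. apply Rlt_le_trans with (Lf vs * / gfun us).
      - apply Rmult_lt_compat_r; auto. apply Rinv_0_lt_compat; lra.
      - apply Rmult_le_compat_l; [lra|]. left. apply Rinv_lt_contravar; nra. }
    assert (wfun vs > c * wfun us).
    { rewrite E1, E2. replace (Lf vs * - (c * ln us) / gfun vs) with (c * (- ln us) * (Lf vs / gfun vs)) by (field; lra).
      replace (c * (Lf us * - ln us / gfun us)) with (c * (- ln us) * (Lf us / gfun us)) by (field; pose proof (g_pos us ltac:(lra)); lra).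
      apply Rmult_lt_compat_l; [nra|]. auto. }
    rewrite Hwus in H0. unfold c in H0.
    assert (k0 / k * / (k0 - 1) * (k - 1) >= 1).
    { apply Rle_ge. apply (Rmult_le_reg_r (k * (k0 - 1))); [nra|]. field_simplify; nra. }
    nra. }
  assert (Hbig : vs < b).
  { destruct (Rlt_or_le vs b) as [|Hbv]; auto. exfalso.
    destruct (Rlt_or_le us b) as [Hub|Hbu].
    - pose proof (contra_left th k us b Hk1 ltac:(lra) Hub ltac:(lra) (eq_sym Sb)) as C.
      assert (Fs th k b < Fs th k us).
      { apply C. intros x Hx. assert (wfun vs < wfun x) by (apply (w_dec us); lra).
        nra. }
      pose proof (Fs_max th k b us Hth Hk1 Gb ltac:(lra)). lra.
    - destruct (Rlt_or_le 1 ((k - 1) * wfun b)) as [Hwb|Hwb].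
      + pose proof (contra_right th k b vs Hk1 ltac:(lra) ltac:(lra) ltac:(lra) (eq_sym Sb)) as C.
        assert (Fs th k b < Fs th k vs).
        { apply C. intros x Hx. destruct (Rle_or_lt x us).
          - assert (wfun b < wfun x) by (apply (w_inc us); lra). nra.
          - assert (wfun vs < wfun x) by (apply (w_dec us); lra). nra. }
        pose proof (Fs_max th k b vs Hth Hk1 Gb ltac:(lra)). lra.
      + assert (Fs th k b < Fs th k a).
        { apply (contra_inc th k a b Hk1 ltac:(lra) Hab Hb (eq_sym Sa)).
          intros x Hx. assert (wfun x < wfun b) by (apply (w_inc us); lra). nra. }
        lra. }
  assert (Hsmall : a < vs).
  { destruct (Rlt_or_le a vs) as [|Hva]; auto. exfalso.
    destruct (Rlt_or_le 1 ((k - 1) * wfun a)) as [Hwa|Hwa].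
    - pose proof (contra_left th k us a Hk1 ltac:(lra) ltac:(lra) ltac:(lra) (eq_sym Sa)) as C.
      assert (Fs th k a < Fs th k us).
      { apply C. intros x Hx. destruct (Rlt_or_le x vs).
        - assert (wfun vs < wfun x) by (apply (w_dec us); lra). nra.
        - assert (wfun a < wfun x) by (apply (w_dec us); lra). nra. }
      pose proof (Fs_max th k a us Hth Hk1 Ga ltac:(lra)). lra.
    - assert (Fs th k b < Fs th k a).
      { apply (contra_inc th k a b Hk1 ltac:(lra) Hab Hb (eq_sym Sa)).
        intros x Hx. assert (wfun x < wfun a) by (apply (w_dec us); lra). nra. }
      lra. }
  rewrite <- HEvs. split; apply E_lt; lra.
Qed.


Definition Phi (u : R) : R := - ln u * (1 + / ((1 - u) * Lf u)).

Lemma Phi_dec : forall x y, / 2 < x -> x < y -> y < 1 -> Phi y < Phi x.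
Proof.
  intros x y Hx Hxy Hy.
  assert (Ex : Phi x = - ln x + gfun x / Lf x).
  { unfold Phi, gfun. pose proof (Lf_pos x ltac:(lra)). field. lra. }
  assert (Ey : Phi y = - ln y + gfun y / Lf y).
  { unfold Phi, gfun. pose proof (Lf_pos y ltac:(lra)). field. lra. }
  rewrite Ex, Ey.
  assert (ln x < ln y) by (apply ln_increasing; lra).
  assert (gfun y < gfun x) by (apply g_dec; lra).
  assert (0 < gfun y) by (apply g_pos; lra).
  assert (Lf x < Lf y) by (apply Lf_lt; lra).
  assert (0 < Lf x) by (apply Lf_pos; lra).
  assert (gfun y / Lf y < gfun x / Lf x).
  { unfold Rdiv. apply Rlt_trans with (gfun x * / Lf y).
    - apply Rmult_lt_compat_r; auto. apply Rinv_0_lt_compat; lra.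
    - apply Rmult_lt_compat_l; [lra|]. apply Rinv_lt_contravar; nra. }
  lra.
Qed.

Definition Hf (b x : R) : R := E x b * Lf (E x b) / (x * Lf x).
Definition rho (b x : R) : R := b * Hf b x.

Lemma E_range : forall b x, 0 < b < 1 -> 0 < x < 1 -> x < E x b < 1.
Proof.
  intros b x Hb Hx.
  assert (Hl : ln x < 0) by (rewrite <- ln_1; apply ln_increasing; lra).
  assert (HlE : ln (E x b) = b * ln x) by (unfold E; apply ln_exp).
  split.
  - apply ln_lt_inv; [lra|apply E_pos|]. rewrite HlE. nra.
  - apply ln_lt_inv; [apply E_pos|lra|]. rewrite HlE, ln_1. nra.
Qed.

Lemma D_Hf : forall b x, 0 < b < 1 -> 0 < x < 1 -> / 2 < x ->
  derivable_pt_lim (Hf b) x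
   (((b * E x b / x) * (Lf (E x b) + / (1 - E x b)) * (x * Lf x)
      - E x b * Lf (E x b) * (Lf x + / (1 - x))) / (x * Lf x) ^ 2).
Proof.
  intros b x Hb Hx Hx2.
  pose proof (E_range b x Hb Hx) as HR.
  pose proof (Lf_pos x ltac:(lra)) as HL.
  apply is_derive_Reals. unfold Hf, Lf, E in *.
  pose proof (exp_pos (b * ln x)).
  auto_derive.
  - replace (1 + - x) with (1 - x) by ring.
    replace (1 + - exp (b * ln x)) with (1 - exp (b * ln x)) by ring.
    repeat split; try lra.
    apply Rgt_not_eq. apply Rmult_lt_0_compat; lra.
  - replace (1 + - x) with (1 - x) by ring.
    replace (1 + - exp (b * ln x)) with (1 - exp (b * ln x)) by ring.
    pose proof (exp_pos (b * ln x)).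
    field. repeat split; try lra.
Qed.

Lemma Hf_dec : forall b p q, 0 < b < 1 -> / 2 < p -> p < q -> q < 1 -> Hf b q < Hf b p.
Proof.
  intros b p q Hb Hp Hpq Hq.
  apply (mono_gt (Hf b) (fun x => ((b * E x b / x) * (Lf (E x b) + / (1 - E x b)) * (x * Lf x)
      - E x b * Lf (E x b) * (Lf x + / (1 - x))) / (x * Lf x) ^ 2) p q Hpq).
  - intros x Hx. apply D_Hf; lra.
  - intros x Hx. cbv beta.
    pose proof (E_range b x Hb ltac:(lra)) as HR.
    set (U := E x b) in *.
    assert (HLx : 0 < Lf x) by (apply Lf_pos; lra).
    assert (HLU : 0 < Lf U) by (apply Lf_pos; lra).
    assert (HU0 : 0 < U) by lra.
    assert (Hlx : ln x < 0) by (rewrite <- ln_1; apply ln_increasing; lra).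
    assert (HlU : ln U = b * ln x) by (unfold U, E; apply ln_exp).
    pose proof (Phi_dec x U ltac:(lra) ltac:(lra) ltac:(lra)) as HP.
    unfold Phi in HP. rewrite HlU in HP.
    set (P := 1 + / ((1 - U) * Lf U)) in *.
    set (Q := 1 + / ((1 - x) * Lf x)) in *.
    assert (HPQ : b * P < Q).
    { apply (Rmult_lt_reg_l (- ln x)); [lra|]. nra. }
    assert (Num : (b * U / x) * (Lf U + / (1 - U)) * (x * Lf x) - U * Lf U * (Lf x + / (1 - x))
                  = U * Lf U * Lf x * (b * P - Q)).
    { unfold P, Q. field. repeat split; lra. }
    rewrite Num. unfold Rdiv.
    apply Rmult_neg_pos.
    + apply Rmult_pos_neg; [|lra]. apply Rmult_lt_0_compat; [|lra]. nra.
    + apply Rinv_0_lt_compat. apply pow_lt. nra.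
Qed.


Lemma D_It : forall b x, 0 < b < 1 -> 0 < x < 1 ->
  derivable_pt_lim (fun y => Iu (E y b)) x (/ 2 * Lf (E x b) * (b * E x b / x)).
Proof.
  intros b x Hb Hx.
  pose proof (E_range b x Hb Hx).
  apply (derivable_pt_lim_comp (fun y => E y b) Iu x (b * E x b / x) (/ 2 * Lf (E x b))).
  - apply D_E; lra.
  - apply D_Iu; lra.
Qed.

Lemma Iu_inc : forall p q, / 2 < p -> p < q -> q < 1 -> Iu p < Iu q.
Proof.
  intros p q Hp Hpq Hq.
  apply (mono_lt Iu (fun u => / 2 * Lf u) p q Hpq).
  - intros; apply D_Iu; lra.
  - intros x Hx. pose proof (Lf_pos x ltac:(lra)). lra.
Qed.

Lemma Hf_pos : forall b x, 0 < b < 1 -> / 2 < x < 1 -> 0 < Hf b x.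
Proof.
  intros b x Hb Hx. pose proof (E_range b x Hb ltac:(lra)).
  pose proof (Lf_pos x Hx). pose proof (Lf_pos (E x b) ltac:(lra)).
  unfold Hf. unfold Rdiv. apply Rmult_lt_0_compat; [nra|]. apply Rinv_0_lt_compat. nra.
Qed.

Lemma key : forall b p q, 0 < b < 1 -> / 2 < p -> p < q -> q < 1 ->
  rho b q * (Iu q - Iu p) < Iu (E q b) - Iu (E p b) /\
  Iu (E q b) - Iu (E p b) < rho b p * (Iu q - Iu p).
Proof.
  intros b p q Hb Hp Hpq Hq.
  set (A := Iu q - Iu p). set (B := Iu (E q b) - Iu (E p b)).
  assert (HA : 0 < A) by (unfold A; pose proof (Iu_inc p q Hp Hpq Hq); lra).
  destruct (MVT_cor2 (fun x => Iu (E x b) * A - Iu x * B)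
             (fun x => (/ 2 * Lf (E x b) * (b * E x b / x)) * A - (/ 2 * Lf x) * B) p q Hpq)
    as [xi [Hxi1 Hxi2]].
  { intros x Hx. apply derivable_pt_lim_minus.
    - apply derivable_pt_lim_scal_right. apply D_It; lra.
    - apply derivable_pt_lim_scal_right. apply D_Iu; lra. }
  assert (Z : (/ 2 * Lf (E xi b) * (b * E xi b / xi)) * A - (/ 2 * Lf xi) * B = 0).
  { assert (Iu (E q b) * A - Iu q * B - (Iu (E p b) * A - Iu p * B) = 0) by (unfold A, B; ring).
    rewrite H in Hxi1. symmetry in Hxi1. apply Rmult_integral in Hxi1. destruct Hxi1; [auto|lra]. }
  assert (HB : B = rho b xi * A).
  { pose proof (Lf_pos xi ltac:(lra)). unfold rho, Hf.
    apply (Rmult_eq_reg_l (/ 2 * Lf xi)); [|nra].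
    replace (/ 2 * Lf xi * B) with ((/ 2 * Lf (E xi b) * (b * E xi b / xi)) * A) by lra.
    field. lra. }
  assert (Hq1 : Hf b q < Hf b xi) by (apply Hf_dec; lra).
  assert (Hp1 : Hf b xi < Hf b p) by (apply Hf_dec; lra).
  unfold rho. rewrite HB. unfold rho. split.
  - apply Rmult_lt_compat_r; auto. apply Rmult_lt_compat_l; lra.
  - apply Rmult_lt_compat_r; auto. apply Rmult_lt_compat_l; lra.
Qed.


Lemma E_le_inv : forall a c k, 0 < a -> 0 < c -> 0 < k -> E a k <= E c k -> a <= c.
Proof.
  intros a c k Ha Hc Hk H. destruct (Rle_or_lt a c); auto.
  pose proof (E_lt c a k Hc H0 Hk). lra.
Qed.

Lemma E_one : forall x, 0 < x -> E x 1 = x.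
Proof. intros. unfold E. rewrite Rmult_1_l. apply exp_ln; auto. Qed.

Lemma noN : forall k k' th th' a b x, 1 < k -> k < k' -> 0 <= th -> two_gmax th k a b ->
  0 <= th' -> is_gmax th' k' x -> ~ (E a k <= E x k' <= E b k).
Proof.
  intros k k' th th' a b x Hk Hkk Hth Htg Hth' Gx [Hxa Hxb].
  destruct (basic th k a b Hth Hk Htg) as [Ha [Hab [Hb Hthp]]].
  destruct Htg as [_ [Ga [Gb _]]].
  pose proof (gmax_sig th k a Hth Hk Ga) as Sa.
  pose proof (gmax_sig th k b Hth Hk Gb) as Sb.
  assert (Fab : Fs th k a = Fs th k b).
  { apply Rle_antisym; [apply (Fs_max th k b a)|apply (Fs_max th k a b)]; auto; lra. }
  assert (Hk' : 1 < k') by lra.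
  pose proof (gmax_interior th' k' x Hth' Hk' Gx) as Ix.
  pose proof (gmax_sig th' k' x Hth' Hk' Gx) as Sx.
  set (bt := k / k').
  assert (Hbt : 0 < bt < 1) by (unfold bt; split; [apply Rdiv_lt_0_compat; lra|];
    apply (Rmult_lt_reg_r k'); try lra; field_simplify; lra).
  set (c := E x (k' / k)).
  assert (Hc0 : 0 < c) by apply E_pos.
  assert (HEc : E c k = E x k') by (unfold c; rewrite E_mult by lra; f_equal; field; lra).
  assert (HcB : E c bt = x) by (unfold c; rewrite E_mult by lra;
     replace (k' / k * bt) with 1 by (unfold bt; field; lra); apply E_one; lra).
  assert (Hac : a <= c) by (apply (E_le_inv a c k); lra).
  assert (Hcb : c <= b) by (apply (E_le_inv c b k); lra).
  assert (Mx : forall y, a <= y <= b ->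
     th' * E y k - Iu (E y bt) <= th' * E c k - Iu (E c bt)).
  { intros y Hy. pose proof (E_range bt y Hbt ltac:(lra)) as Ry.
    destruct Gx as [_ Hm]. pose proof (Hm (E y bt) ltac:(lra)) as H.
    rewrite !Fth_eq in H by lra. rewrite HcB, HEc.
    rewrite E_mult in H by lra. replace (bt * k') with k in H by (unfold bt; field; lra).
    exact H. }
  set (sg := sigk k c). set (rh := rho bt c).
  assert (Hrh : 0 < rh) by (unfold rh, rho; apply Rmult_lt_0_compat; [lra|]; apply Hf_pos; lra).
  assert (Hth'e : th' = rh * sg).
  { rewrite Sx. unfold rh, sg, rho, Hf, sigk. rewrite HcB.
    rewrite !E_1mk by lra. rewrite <- HEc.
    pose proof (E_pos c k). pose proof (Lf_pos c ltac:(lra)).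
    unfold bt. field. repeat split; lra. }
  assert (Mc : Fs th k c <= Fs th k a) by (apply (Fs_max th k a c); auto; lra).
  unfold Fs in Fab, Mc.
  destruct (Rle_lt_or_eq_dec a c Hac) as [Hac'|Hac'].
  - assert (Star : Iu c - Iu a < sg * (E c k - E a k)).
    { destruct (key bt a c Hbt Ha Hac' ltac:(lra)) as [K1 _].
      pose proof (Mx a ltac:(lra)). fold rh in K1.
      apply (Rmult_lt_reg_l rh); auto. rewrite Hth'e in H. nra. }
    destruct (Rle_lt_or_eq_dec c b Hcb) as [Hcb'|Hcb'].
    + assert (SS : sg * (E b k - E c k) < Iu b - Iu c).
      { destruct (key bt c b Hbt ltac:(lra) Hcb' Hb) as [_ K2].
        pose proof (Mx b ltac:(lra)). fold rh in K2.
        apply (Rmult_lt_reg_l rh); auto. rewrite Hth'e in H. nra. }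
      assert (E a k < E c k) by (apply E_lt; lra).
      assert (E c k < E b k) by (apply E_lt; lra).
      assert (th < sg) by nra.
      assert (sg < th) by nra.
      lra.
    + assert (sg = th) by (unfold sg; rewrite Hcb'; auto).
      rewrite Hcb' in Star. rewrite H in Star. nra.
  - assert (SS : sg * (E b k - E c k) < Iu b - Iu c).
    { destruct (key bt c b Hbt ltac:(lra) ltac:(lra) Hb) as [_ K2].
      pose proof (Mx b ltac:(lra)). fold rh in K2.
      apply (Rmult_lt_reg_l rh); auto. rewrite Hth'e in H. nra. }
    assert (sg = th) by (unfold sg; rewrite <- Hac'; auto).
    rewrite <- Hac' in SS. rewrite H in SS. nra.
Qed.


Theorem lemma3p2 :
  forall k0 : R, is_k0 k0 ->
  forall k k' theta theta' u1 u2 u1' u2' : R,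
    k0 < k -> k < k' ->
    0 <= theta -> two_gmax theta k u1 u2 ->
    0 <= theta' -> two_gmax theta' k' u1' u2' ->
    rpow u1' k' < rpow u1 k /\ rpow u2 k < rpow u2' k'.
Proof.
  intros k0 Hk0 k k' th th' u1 u2 u1' u2' Hk Hkk Hth Htg Hth' Htg'.
  destruct (k0_facts k0 Hk0) as [Hk02 _].
  assert (Hk1 : 1 < k) by lra. assert (Hk1' : 1 < k') by lra.
  pose proof (sep k0 k th u1 u2 Hk0 Hk Hth Htg) as [S1 S2].
  pose proof (sep k0 k' th' u1' u2' Hk0 ltac:(lra) Hth' Htg') as [S1' S2'].
  destruct (basic th k u1 u2 Hth Hk1 Htg) as [B1 [B2 [B3 _]]].
  destruct (basic th' k' u1' u2' Hth' Hk1' Htg') as [B1' [B2' [B3' _]]].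
  pose proof Htg' as [_ [G1' [G2' _]]].
  pose proof (noN k k' th th' u1 u2 u1' Hk1 Hkk Hth Htg Hth' G1') as N1.
  pose proof (noN k k' th th' u1 u2 u2' Hk1 Hkk Hth Htg Hth' G2') as N2.
  rewrite !rpow_eq by lra.
  split.
  - destruct (Rlt_or_le (E u1' k') (E u1 k)) as [|H]; auto.
    exfalso. apply N1. split; lra.
  - destruct (Rlt_or_le (E u2 k) (E u2' k')) as [|H]; auto.
    exfalso. apply N2. split; lra.
Qed.
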